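(* Let $\mathcal{G}$ be a finite-dimensional Lie algebra with Levi–Malcev decomposition $\mathcal{G}=N\ltimes S$, where $N$ is the radical and $S$ a semisimple (Levi) subalgebra, and let $\mathcal{S}$ be a finite abelian semigroup. Let $\mathcal{G}_{\mathcal{S}}=\mathcal{S}\otimes\mathcal{G}$ be the $\mathcal{S}$-expanded algebra, $E_N=\mathcal{S}\otimes N$ and $E_S=\mathcal{S}\otimes S$, so that $E_S$ is a subalgebra (the expansion of $S$), and let $E_S=N'\ltimes S_{\mathrm{exp}}$ be a Levi–Malcev decomposition of $E_S$, with $N'$ the radical of $E_S$ and $S_{\mathrm{exp}}$ semisimple. Then $N_{\mathrm{exp}}=E_N+N'$ is the radical of $\mathcal{G}_{\mathcal{S}}$, and $\mathcal{G}_{\mathcal{S}}=N_{\mathrm{exp}}\ltimes S_{\mathrm{exp}}$ is a Levi–Malcev decomposition of $\mathcal{G}_{\mathcal{S}}$.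
   Context: For a Lie algebra $\mathcal{G}$ with basis $\{X_i\}$, $[X_i,X_j]=C_{ij}^kX_k$, and a finite abelian semigroup $\mathcal{S}=\{\lambda_\alpha\}$ with 2-selector $K_{\alpha\beta}^\gamma$ ($=1$ if $\lambda_\alpha\lambda_\beta=\lambda_\gamma$, else $0$), the expanded algebra $\mathcal{S}\otimes\mathcal{G}$ has basis $\lambda_\alpha\otimes X_i$ and bracket $[\lambda_\alpha\otimes X_i,\lambda_\beta\otimes X_j]=K_{\alpha\beta}^\gamma C_{ij}^k\,\lambda_\gamma\otimes X_k$; for a subspace $V\subset\mathcal{G}$, $\mathcal{S}\otimes V$ denotes the span of $\lambda_\alpha\otimes v$, $v\in V$. The radical of a Lie algebra is its maximal solvable ideal; a Levi–Malcev decomposition writes the algebra as a semidirect sum of its radical and a semisimple subalgebra. *)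

(* Defs.v *)
From HB Require Import structures.
From mathcomp Require Import all_boot all_order all_algebra.
Set Implicit Arguments. Unset Strict Implicit. Unset Printing Implicit Defensive.
Import GRing.Theory.
Local Open Scope ring_scope.

Section LieGeneric.
Variables (F : fieldType) (V : vectType F) (br : V -> V -> V).

Definition is_lie : Prop :=
  [/\ (forall a x y z, br (a *: x + y) z = a *: br x z + br y z),
      (forall a x y z, br z (a *: x + y) = a *: br z x + br z y),
      (forall x, br x x = 0) &
      (forall x y z, br x (br y z) + br y (br z x) + br z (br x y) = 0)].

(* [A, B] : the subspace spanned by all brackets [a, b], a in A, b in B
   (by bilinearity, spanned by brackets of basis vectors). *)
Definition brspace (A B : {vspace V}) : {vspace V} :=
  (<<[seq br x y | x <- vbasis A, y <- vbasis B]>>)%VS.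

Definition subalg (A : {vspace V}) : Prop := (brspace A A <= A)%VS.

Definition ideal_of (L I : {vspace V}) : Prop :=
  (I <= L)%VS /\ (brspace L I <= I)%VS.

Definition derived (A : {vspace V}) (k : nat) : {vspace V} :=
  iter k (fun B => brspace B B) A.

Definition solvable (A : {vspace V}) : Prop := exists k, derived A k = 0%VS.

Definition radical_of (L R : {vspace V}) : Prop :=
  [/\ ideal_of L R, solvable R &
      forall I, ideal_of L I -> solvable I -> (R <= I)%VS -> I = R].

Definition semisimple (S : {vspace V}) : Prop :=
  subalg S /\ forall I, ideal_of S I -> solvable I -> I = 0%VS.

Definition levi_decomp (L N S : {vspace V}) : Prop :=
  [/\ radical_of L N, subalg S, semisimple S,
      directv (N + S)%VS & (N + S)%VS = L].

End LieGeneric.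

(* G has basis X_0..X_{n-1}; elements are row vectors of coordinates.
   C i j k are the structure constants: [X_i, X_j] = sum_k C i j k X_k. *)
Definition lie_br (F : fieldType) (n : nat) (C : 'I_n -> 'I_n -> 'I_n -> F)
  (u v : 'rV[F]_n) : 'rV[F]_n :=
  \row_k \sum_i \sum_j u 0 i * v 0 j * C i j k.

(* Finite abelian semigroup {lambda_0..lambda_{m-1}} with product mul;
   2-selector K a b g = 1 if lambda_a lambda_b = lambda_g, else 0. *)
Definition selector (m : nat) (mul : 'I_m -> 'I_m -> 'I_m) (a b g : 'I_m)
  (F : fieldType) : F := (mul a b == g)%:R.

(* Expanded algebra S (x) G: an element is an m x n matrix A, standing for
   sum_{a,i} A a i (lambda_a (x) X_i). *)
Definition exp_br (F : fieldType) (m n : nat) (mul : 'I_m -> 'I_m -> 'I_m)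
  (C : 'I_n -> 'I_n -> 'I_n -> F) (A B : 'M[F]_(m, n)) : 'M[F]_(m, n) :=
  \matrix_(g, k) \sum_a \sum_b \sum_i \sum_j
     (selector mul a b g F * C i j k * A a i * B b j).

(* lambda_a (x) v : the matrix whose row a is v and other rows are 0 *)
Definition tens (F : fieldType) (m n : nat) (a : 'I_m) (v : 'rV[F]_n)
  : 'M[F]_(m, n) := (delta_mx a (0 : 'I_1)) *m v.

(* S (x) W : span of lambda_a (x) v, v in W (equivalently v in a basis of W) *)
Definition expand_space (F : fieldType) (m n : nat) (W : {vspace 'rV[F]_n})
  : {vspace 'M[F]_(m, n)} :=
  (<<[seq tens a v | a <- enum 'I_m, v <- vbasis W]>>)%VS.

(* Main.v *)
Require Import Defs.
From HB Require Import structures.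
From mathcomp Require Import all_boot all_order all_algebra.
Set Implicit Arguments. Unset Strict Implicit. Unset Printing Implicit Defensive.
Import GRing.Theory.
Local Open Scope ring_scope.

Lemma lin_mem (K : fieldType) (V W : vectType K) (f : V -> W)
  (fl : forall a x y, f (a *: x + y) = a *: f x + f y) (X : seq V)
  (U : {vspace W}) z :
  z \in <<X>>%VS -> (forall x, x \in X -> f x \in U) -> f z \in U.
Proof.
move=> /(@coord_span _ _ _ (in_tuple X)) -> H.
have f0 : f 0 = 0 by have := fl (-1) 0 0; rewrite scaler0 addr0 scaleN1r addNr.
have fs : forall k (c : 'I_k -> K) (x : 'I_k -> V),
    f (\sum_i c i *: x i) = \sum_i c i *: f (x i).
  by move=> k c x; elim/big_rec2: _ => [|i y1 y2 _ <-]; [exact f0| rewrite fl].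
rewrite fs; apply: memv_suml => i _; apply: memvZ; apply: H.
by apply: mem_nth; exact: ltn_ord.
Qed.

Section Gen.
Variables (F : fieldType) (V : vectType F) (br : V -> V -> V).
Hypothesis brL : forall a x y z, br (a *: x + y) z = a *: br x z + br y z.
Hypothesis brR : forall a x y z, br z (a *: x + y) = a *: br z x + br z y.

Lemma mem_br (A B : {vspace V}) x y : x \in A -> y \in B -> br x y \in brspace br A B.
Proof.
rewrite -{1}(span_basis (vbasisP A)) -{1}(span_basis (vbasisP B)) => Ax By.
apply: (lin_mem (f := br^~ y)) Ax _ => [a u v|u Hu]; first exact: brL.
apply: (lin_mem (f := br u)) By _ => [a v w|v Hv]; first exact: brR.
by apply: memv_span; apply: allpairs_f.
Qed.

Lemma brsubP (A B U : {vspace V}) :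
  (brspace br A B <= U)%VS <-> (forall x y, x \in A -> y \in B -> br x y \in U).
Proof.
split => [/subvP H x y Ax By|H]; first by apply: H; apply: mem_br.
apply/span_subvP => z /allpairsP [[x y] /= [Hx Hy ->]].
by apply: H; apply: vbasis_mem.
Qed.

Lemma brspace_mono A A' B B' : (A <= A')%VS -> (B <= B')%VS ->
  (brspace br A B <= brspace br A' B')%VS.
Proof.
move=> /subvP HA /subvP HB; apply/brsubP => x y Ax By.
by apply: mem_br; [apply: HA | apply: HB].
Qed.

Lemma derived_mono A B k : (A <= B)%VS -> (derived br A k <= derived br B k)%VS.
Proof.
move=> AB; elim: k => [|k IH] //.
by rewrite /derived !iterS; apply: brspace_mono.
Qed.

Lemma derivedD A k l : derived br A (l + k) = derived br (derived br A k) l.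
Proof. by rewrite /derived iterD. Qed.

Lemma derived0 l : derived br 0 l = 0%VS.
Proof.
elim: l => [|l IH] //; rewrite /derived iterS -/(derived br 0 l) IH.
apply/eqP; rewrite eqEsubv sub0v andbT; apply/brsubP => x y.
rewrite memv0 => /eqP -> _.
have := brL (-1) 0 0 y; rewrite scaler0 addr0 scaleN1r addNr => ->; by rewrite memv0.
Qed.

Lemma solvable_sub A B : (A <= B)%VS -> solvable br B -> solvable br A.
Proof.
move=> AB [k Hk]; exists k; apply/eqP; rewrite eqEsubv sub0v andbT.
by rewrite -Hk derived_mono.
Qed.

End Gen.

From mathcomp Require Import ring.

Section Spec.
Variables (F : fieldType) (n : nat) (C : 'I_n -> 'I_n -> 'I_n -> F)
  (m : nat) (mul : 'I_m -> 'I_m -> 'I_m).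
Local Notation lb := (lie_br C).
Local Notation eb := (exp_br mul C).

Lemma row_eb (A B : 'M[F]_(m, n)) g :
  row g (eb A B) = \sum_a \sum_b (mul a b == g)%:R *: lb (row a A) (row b B).
Proof.
apply/rowP => k; rewrite !mxE summxE; apply: eq_bigr => a _.
rewrite summxE; apply: eq_bigr => b _; rewrite !mxE big_distrr /=.
apply: eq_bigr => i _; rewrite big_distrr; apply: eq_bigr => j _.
rewrite !mxE /selector /=; ring.
Qed.

Lemma row_tens (g a : 'I_m) (v : 'rV[F]_n) : row g (tens a v) = (g == a)%:R *: v.
Proof. by apply/rowP => k; rewrite !mxE big_ord1 !mxE eqxx andbT. Qed.

Lemma memE (W : {vspace 'rV[F]_n}) B :
  B \in expand_space m W <-> forall a, row a B \in W.
Proof.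
split.
- move=> HB a; apply: (lin_mem (f := row a)) HB _ => [c x y|x].
    by rewrite linearP.
  move=> /allpairsP [[a' v] /= [Ha' Hv ->]].
  by rewrite row_tens; apply: memvZ; exact: vbasis_mem.
- move=> H; have -> : B = \sum_a tens a (row a B).
    apply/row_matrixP => g; rewrite raddf_sum (bigD1 g) //= row_tens eqxx.
    rewrite scale1r big1 ?addr0 // => a.
    by rewrite row_tens eq_sym => /negbTE ->; rewrite scale0r.
  apply: memv_suml => a _; have := H a.
  rewrite -{1}(span_basis (vbasisP W)) => Ha.
  apply: (lin_mem (f := tens a)) Ha _ => [c x y|v Hv].
    by rewrite /tens mulmxDr scalemxAr.
  by apply: memv_span; apply: allpairs_f => //; rewrite mem_enum.
Qed.

Lemma expand_br (U U' W : {vspace 'rV[F]_n}) A B :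
  (forall u v, u \in U -> v \in U' -> lb u v \in W) ->
  A \in expand_space m U -> B \in expand_space m U' ->
  eb A B \in expand_space m W.
Proof.
move=> H /memE HA /memE HB; apply/memE => g; rewrite row_eb.
apply: memv_suml => a _; apply: memv_suml => b _; apply: memvZ; exact: H.
Qed.

Lemma expand_mono (U W : {vspace 'rV[F]_n}) :
  (U <= W)%VS -> (expand_space m U <= expand_space m W)%VS.
Proof.
move=> /subvP H; apply/subvP => A /memE HA; apply/memE => a; exact: H.
Qed.

Lemma expand0 : expand_space m (0 : {vspace 'rV[F]_n}) = 0%VS.
Proof.
apply/eqP; rewrite eqEsubv sub0v andbT; apply/subvP => A /memE HA.
rewrite memv0; apply/eqP/row_matrixP => a; rewrite row0.
by have := HA a; rewrite memv0 => /eqP.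
Qed.

Hypothesis lbL : forall a x y z, lb (a *: x + y) z = a *: lb x z + lb y z.
Hypothesis lbR : forall a x y z, lb z (a *: x + y) = a *: lb z x + lb z y.

Lemma ebL a X Y Z : eb (a *: X + Y) Z = a *: eb X Z + eb Y Z.
Proof.
apply/row_matrixP => g; rewrite linearP /= !row_eb scaler_sumr -big_split.
apply: eq_bigr => a' _; rewrite scaler_sumr -big_split; apply: eq_bigr => b _ /=.
by rewrite linearP lbL scalerDr !scalerA mulrC.
Qed.

Lemma ebR a X Y Z : eb Z (a *: X + Y) = a *: eb Z X + eb Z Y.
Proof.
apply/row_matrixP => g; rewrite linearP /= !row_eb scaler_sumr -big_split.
apply: eq_bigr => a' _; rewrite scaler_sumr -big_split; apply: eq_bigr => b _ /=.
by rewrite linearP lbR scalerDr !scalerA mulrC.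
Qed.

End Spec.

Section Main.
Variables (F : fieldType) (n : nat) (C : 'I_n -> 'I_n -> 'I_n -> F)
  (m : nat) (mul : 'I_m -> 'I_m -> 'I_m)
  (N S : {vspace 'rV[F]_n}) (N' Sexp : {vspace 'M[F]_(m, n)}).
Local Notation lb := (lie_br C).
Local Notation eb := (exp_br mul C).
Hypothesis Hlie : is_lie lb.
Hypothesis Nid : (brspace lb fullv N <= N)%VS.
Hypothesis solN : solvable lb N.
Hypothesis subS : subalg lb S.
Hypothesis dirNS : directv (N + S).
Hypothesis NSf : (N + S)%VS = fullv.
Hypothesis N'sub : (N' <= expand_space m S)%VS.
Hypothesis N'id : (brspace eb (expand_space m S) N' <= N')%VS.
Hypothesis solN' : solvable eb N'.
Hypothesis maxN' : forall I, ideal_of eb (expand_space m S) I -> solvable eb I ->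
  (N' <= I)%VS -> I = N'.
Hypothesis dirN'S : directv (N' + Sexp).
Hypothesis N'Sf : (N' + Sexp)%VS = expand_space m S.

Let lbL : forall a x y z, lb (a *: x + y) z = a *: lb x z + lb y z.
Proof. by case: Hlie. Qed.
Let lbR : forall a x y z, lb z (a *: x + y) = a *: lb z x + lb z y.
Proof. by case: Hlie. Qed.
Let lbxx : forall x, lb x x = 0.
Proof. by case: Hlie. Qed.
Let lbD1 x y z : lb (x + y) z = lb x z + lb y z.
Proof. by have := lbL 1 x y z; rewrite !scale1r. Qed.
Let lbD2 x y z : lb z (x + y) = lb z x + lb z y.
Proof. by have := lbR 1 x y z; rewrite !scale1r. Qed.
Let lb_anti x y : lb x y = - lb y x.
Proof.
apply/eqP; rewrite -addr_eq0; have := lbxx (x + y).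
by rewrite lbD1 !lbD2 !lbxx add0r addr0 => ->.
Qed.
Let NidL u v : v \in N -> lb u v \in N.
Proof. by move=> Hv; apply: ((brsubP lbL lbR _ _ _).1 Nid) => //; exact: memvf. Qed.
Let NidR u v : u \in N -> lb u v \in N.
Proof. by move=> Hu; rewrite lb_anti memvN NidL. Qed.
Let SS u v : u \in S -> v \in S -> lb u v \in S.
Proof. by move=> Hu Hv; apply: ((brsubP lbL lbR _ _ _).1 subS). Qed.

Let cap0 : (S :&: N = 0)%VS.
Proof. by rewrite capvC; apply/directv_addP. Qed.
Let cap0' : (N :&: S = 0)%VS.
Proof. by apply/directv_addP. Qed.
Let p := daddv_pi S N.
Let p_in u : p u \in S. Proof. exact: memv_pi. Qed.
Let p_id s : s \in S -> p s = s. Proof. exact: daddv_pi_id. Qed.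
Let p_add u : p u + daddv_pi N S u = u.
Proof. by apply: daddv_pi_add => //; rewrite addvC NSf memvf. Qed.
Let p_N u : u - p u \in N.
Proof. by rewrite -{1}(p_add u) addrAC subrr add0r memv_pi. Qed.
Let p_0 x : x \in N -> p x = 0.
Proof.
move=> Hx; have := p_add x; rewrite (daddv_pi_id cap0' Hx).
by move/(canRL (addrK _)); rewrite subrr.
Qed.
Let p_hom u v : p (lb u v) = lb (p u) (p v).
Proof.
rewrite -[u in lb u v](subrK (p u)) -[v in lb _ v](subrK (p v)).
have Hn1 := p_N u; have Hn2 := p_N v.
move: (u - p u) (v - p v) Hn1 Hn2 => n1 n2 Hn1 Hn2.
rewrite lbD1 !lbD2 !linearD /= (p_0 (NidL _ Hn2)) (p_0 (NidR _ Hn1)).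
by rewrite (p_0 (NidL _ Hn2)) (p_id (SS (p_in u) (p_in v))) !add0r.
Qed.

Local Notation EN := (expand_space m N).
Local Notation ES := (expand_space m S).
Let ebL := ebL mul lbL.
Let ebR := ebR mul lbR.
Let P (A : 'M[F]_(m, n)) : 'M[F]_(m, n) := \matrix_(a < m) p (row a A).
Let rowP_ a A : row a (P A) = p (row a A). Proof. exact: rowK. Qed.
Let P_lin c X Y : P (c *: X + Y) = c *: P X + P Y.
Proof. by apply/row_matrixP => a; rewrite linearP /= !rowP_ !linearP. Qed.
Let PD X Y : P (X + Y) = P X + P Y.
Proof. by have := P_lin 1 X Y; rewrite !scale1r. Qed.
Let P_ES A : P A \in ES.
Proof. by apply/memE => a; rewrite rowP_. Qed.
Let P_idES A : A \in ES -> P A = A.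
Proof. by move/memE => H; apply/row_matrixP => a; rewrite rowP_ p_id. Qed.
Let P_EN A : A - P A \in EN.
Proof. by apply/memE => a; rewrite linearB /= rowP_. Qed.
Let P_0 A : A \in EN -> P A = 0.
Proof.
move/memE => H; apply/row_matrixP => a; rewrite rowP_ p_0 //.
by apply/rowP => k; rewrite !mxE.
Qed.
Let P_hom A B : P (eb A B) = eb (P A) (P B).
Proof.
apply/row_matrixP => g; rewrite rowP_ !row_eb linear_sum; apply: eq_bigr => a _.
rewrite linear_sum; apply: eq_bigr => b _; by rewrite linearZ /= p_hom !rowP_.
Qed.

Local Notation R := (EN + N')%VS.

Let memR X : X \in R <-> P X \in N'.
Proof.
split.
- case/memv_addP => Y HY [Z HZ ->]; rewrite PD P_0 // add0r P_idES //.
  exact: (subvP N'sub).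
- move=> H; rewrite -[X](subrK (P X)); exact: memv_add.
Qed.

Let idealR : ideal_of eb fullv R.
Proof.
split; first exact: subvf.
apply/(brsubP ebL ebR) => A B _ /memR HB; apply/memR; rewrite P_hom.
by apply: ((brsubP ebL ebR _ _ _).1 N'id) => //.
Qed.

Let derR k X : X \in derived eb R k -> P X \in derived eb N' k.
Proof.
elim: k X => [|k IH] X; first by move/memR.
rewrite /derived iterS => HX.
apply: (lin_mem (f := P)) HX _ => [c Y Z|z]; first exact: P_lin.
move=> /allpairsP [[x0 y] /= [Hx Hy ->]]; rewrite P_hom.
by apply: mem_br => //; apply: IH; apply: vbasis_mem.
Qed.

Let derEN k : (derived eb EN k <= expand_space m (derived lb N k))%VS.
Proof.
elim: k => [|k IH] //; rewrite /derived !iterS.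
apply/(brsubP ebL ebR) => x y Hx Hy.
apply: expand_br; [|exact: (subvP IH)|exact: (subvP IH)].
by move=> u v Hu Hv; apply: mem_br.
Qed.

Let solR : solvable eb R.
Proof.
case: solN => kN HkN; case: solN' => kN' HkN'.
exists (kN + kN'); apply/eqP; rewrite eqEsubv sub0v andbT derivedD.
have H1 : (derived eb R kN' <= EN)%VS.
  apply/subvP => X HX; have := derR HX; rewrite HkN' memv0 => /eqP HP0.
  by rewrite -[X]subr0 -HP0; exact: P_EN.
apply: (subv_trans (derived_mono ebL ebR _ H1)).
by apply: (subv_trans (derEN kN)); rewrite HkN expand0.
Qed.

Let radR : radical_of eb fullv R.
Proof.
split => //; move=> I [_ Iid] solI RI.
apply/eqP; rewrite eqEsubv RI andbT; apply/subvP => X HX; apply/memR.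
have JE : (I :&: ES)%VS = N'.
  apply: maxN'.
  - split; first exact: capvSr.
    apply/(brsubP ebL ebR) => x y Hx /memv_capP [HyI HyS].
    rewrite memv_cap; apply/andP; split.
      by apply: ((brsubP ebL ebR _ _ _).1 Iid) => //; exact: memvf.
    by apply: expand_br Hx HyS.
  - exact: (solvable_sub ebL ebR (capvSl _ _) solI).
  - rewrite subv_cap N'sub andbT; apply: subv_trans RI; exact: addvSr.
rewrite -JE memv_cap P_ES andbT.
have -> : P X = X - (X - P X) by rewrite opprB addrC subrK.
apply: memvB => //; apply: (subvP RI); apply: (subvP (addvSl _ _)); exact: P_EN.
Qed.

Lemma main_levi : subalg eb Sexp -> semisimple eb Sexp ->
  radical_of eb fullv R /\ levi_decomp eb fullv R Sexp.
Proof.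
move=> sSexp ssSexp; split => //; split => //.
- apply/directv_addP/eqP; rewrite eqEsubv sub0v andbT.
  apply/subvP => X /memv_capP [HR HS].
  have HSE : X \in ES by rewrite -N'Sf; apply: (subvP (addvSr _ _)).
  move/memR: HR; rewrite P_idES // => HN'.
  by rewrite -(directv_addP dirN'S) memv_cap HN'.
- apply/eqP; rewrite eqEsubv subvf /=; apply/subvP => X _.
  have := P_ES X; rewrite -N'Sf => /memv_addP [Y HY [Z HZ e]].
  rewrite -[X](subrK (P X)); have HW := P_EN X.
  move: (X - P X) HW => W HW; rewrite e addrA; apply: memv_add => //.
  exact: memv_add.
Qed.

End Main.

Theorem theorem4 (F : fieldType) (charF0 : [pchar F] =i pred0)
  (n : nat) (C : 'I_n -> 'I_n -> 'I_n -> F)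
  (m : nat) (mul : 'I_m -> 'I_m -> 'I_m)
  (mulA : associative mul) (mulC : commutative mul)
  (N S : {vspace 'rV[F]_n})
  (N' Sexp : {vspace 'M[F]_(m, n)}) :
  is_lie (lie_br C) ->
  levi_decomp (lie_br C) fullv N S ->
  levi_decomp (exp_br mul C) (expand_space m S) N' Sexp ->
  radical_of (exp_br mul C) fullv (expand_space m N + N')%VS /\
  levi_decomp (exp_br mul C) fullv (expand_space m N + N')%VS Sexp.
Proof.
move=> Hlie [[[_ Nid] solN _] subS _ dirNS NSf] [[[N'sub N'id] solN' maxN'] sSexp ssSexp dirN'S N'Sf].
exact: (main_levi Hlie Nid solN subS dirNS NSf N'sub N'id solN' maxN' dirN'S N'Sf sSexp ssSexp).
Qed.
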